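(* Let $H$ be a CAT($-1$) space, $G<\operatorname{Isom}(H)$ acting cocompactly, and $\Phi\in\mathcal{H}$ a $G$-invariant function. Then $\lambda_\Phi=\lambda_{\hat\Phi}\geq\lambda_{\mathrm{Sym}(\Phi)}$.
   Context: $SH$ is the space of unit speed bi-infinite geodesics in $H$ with metric $\operatorname{dist}(\gamma_1,\gamma_2)=\frac12\int_{-\infty}^{\infty}d(\gamma_1(t),\gamma_2(t))e^{-|t|}dt$, geodesic flow $\mathsf g^t\gamma(s)=\gamma(s+t)$, $G$ acting by composition; every geodesic segment is assumed to extend to a bi-infinite geodesic. $\mathcal{H}$ is the set of bounded Hölder functions $\Phi$ on $SH$ with $\Phi(\gamma_1)=\Phi(\gamma_2)$ whenever $\gamma_1|_{[0,\epsilon]}=\gamma_2|_{[0,\epsilon]}$ for some $\epsilon>0$. $\hat\Phi(\gamma)=\Phi(-\gamma)$ with $-\gamma(t)=\gamma(-t)$, and $\mathrm{Sym}(\Phi)=\frac{\Phi+\hat\Phi}{2}$. For any function $\Psi$ on $SH$ and $p\neq q$, $d^\Psi(p,q)=\int_0^{d(p,q)}\Psi(\mathsf g^t\gamma_{p,q})dt$ with $\gamma_{p,q}\in SH$ a geodesic with $\gamma_{p,q}(0)=p$, $\gamma_{p,q}(d(p,q))=q$. The critical exponent is $\lambda_\Psi=\sup\{\lambda:\sum_{g\in G}e^{-d^\Psi(p,gp)-\lambda d(p,gp)}=\infty\}$ for a fixed $p\in H$ (independent of $p$). *)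

(* Defs.v *)
From HB Require Import structures.
From mathcomp Require Import all_boot all_order all_algebra.
From mathcomp Require Import all_classical all_reals all_analysis.
Set Implicit Arguments. Unset Strict Implicit. Unset Printing Implicit Defensive.
Import Order.TTheory GRing.Theory Num.Theory numFieldNormedType.Exports.
Local Open Scope classical_set_scope.
Local Open Scope ring_scope.

Section Defs.
Variables (R : realType) (H : choiceType) (d : H -> H -> R).

Definition is_metric : Prop :=
  [/\ forall x y, 0 <= d x y,
      forall x y, d x y = 0 <-> x = y,
      forall x y, d x y = d y x &
      forall x y z, d x z <= d x y + d y z].

Definition is_geodesic (g : R -> H) : Prop :=
  forall s t, d (g s) (g t) = `|s - t|.

Definition is_segment (c : R -> H) (p q : H) : Prop :=
  c 0 = p /\ c (d p q) = q /\
  forall s t, 0 <= s <= d p q -> 0 <= t <= d p q -> d (c s) (c t) = `|s - t|.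

Definition geodesic_space : Prop :=
  forall p q, exists c, is_segment c p q.

Definition segments_extend : Prop :=
  forall c p q, is_segment c p q ->
    exists g, is_geodesic g /\ forall t, 0 <= t <= d p q -> g t = c t.

Definition cosh (x : R) : R := (expR x + expR (- x)) / 2.
Definition sinh (x : R) : R := (expR x - expR (- x)) / 2.

(** cosh of the distance in the hyperbolic plane H^2 between the comparison
    points at distances [s] and [t] from the vertex [p'] on the sides
    [p'q'] and [p'r'] of the comparison triangle with side lengths
    a = |p'q'|, b = |p'r'|, c = |q'r'| (hyperbolic law of cosines). *)
Definition cosh_comparison (a b c s t : R) : R :=
  cosh s * cosh t - sinh s * sinh t *
    ((cosh a * cosh b - cosh c) / (sinh a * sinh b)).

(** CAT(-1): geodesic space whose geodesic triangles are thinner than their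
    comparison triangles in H^2 (checked for a pair of points on two sides
    issuing from a common vertex, which covers all pairs of points). *)
Definition CAT_minus1 : Prop :=
  is_metric /\ geodesic_space /\
  forall p q r c1 c2, is_segment c1 p q -> is_segment c2 p r ->
    forall s t, 0 <= s <= d p q -> 0 <= t <= d p r ->
      cosh (d (c1 s) (c2 t)) <= cosh_comparison (d p q) (d p r) (d q r) s t.

Definition isometry (g : H -> H) : Prop :=
  (forall x y, d (g x) (g y) = d x y) /\ (forall y, exists x, g x = y).

Definition isom_subgroup (G : set (H -> H)) : Prop :=
  [/\ forall g, G g -> isometry g,
      G id,
      forall g h, G g -> G h -> G (g \o h) &
      forall g, G g -> exists h, G h /\ g \o h = id /\ h \o g = id].

Definition seq_compact (K : set H) : Prop :=
  forall u : nat -> H, (forall n, K (u n)) ->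
    exists (phi : nat -> nat) (x : H), (forall n, (phi n < phi n.+1)%N) /\ K x /\
      (fun n => d (u (phi n)) x) @ \oo --> 0.

Definition cocompact (G : set (H -> H)) : Prop :=
  exists K, seq_compact K /\ forall x, exists g k, G g /\ K k /\ x = g k.

Definition distSH (g1 g2 : R -> H) : R :=
  2^-1 * fine (\int[lebesgue_measure]_(t in [set: R])
                 (d (g1 t) (g2 t) * expR (- `|t|))%:E)%E.

(** the class \mathcal{H} (functions on SH, i.e. on geodesics) *)
Definition classH (Phi : (R -> H) -> R) : Prop :=
  (exists M, forall g, is_geodesic g -> `|Phi g| <= M) /\
  (exists C alpha, 0 < alpha <= 1 /\
     forall g1 g2, is_geodesic g1 -> is_geodesic g2 ->
       `|Phi g1 - Phi g2| <= C * (distSH g1 g2) `^ alpha) /\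
  (forall g1 g2, is_geodesic g1 -> is_geodesic g2 ->
     (exists eps, 0 < eps /\ forall t, 0 <= t <= eps -> g1 t = g2 t) ->
     Phi g1 = Phi g2).

Definition G_invariant (G : set (H -> H)) (Phi : (R -> H) -> R) : Prop :=
  forall g gam, G g -> is_geodesic gam -> Phi (g \o gam) = Phi gam.

Definition flow (t : R) (gam : R -> H) : R -> H := fun s => gam (s + t).
Definition flip (gam : R -> H) : R -> H := fun s => gam (- s).
Definition hat (Phi : (R -> H) -> R) : (R -> H) -> R := fun gam => Phi (flip gam).
Definition Sym (Phi : (R -> H) -> R) : (R -> H) -> R :=
  fun gam => (Phi gam + hat Phi gam) / 2.

Definition geodesic_choice (gpq : H -> H -> R -> H) : Prop :=
  forall p q, p <> q ->
    [/\ is_geodesic (gpq p q), gpq p q 0 = p & gpq p q (d p q) = q].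

Definition dPsi (gpq : H -> H -> R -> H) (Psi : (R -> H) -> R) (p q : H) : R :=
  let I : set R := [set t : R | (0 <= t <= d p q)%R] in
  fine (\int[lebesgue_measure]_(t in I) (Psi (flow t (gpq p q)))%:E)%E.

Definition crit_exp (G : set (H -> H)) (gpq : H -> H -> R -> H)
    (Psi : (R -> H) -> R) (p : H) : \bar R :=
  ereal_sup [set (lam%:E)%E | lam in
     [set lam : R | (\esum_(g in G)
        (expR (- dPsi gpq Psi p (g p) - lam * d p (g p)))%:E)%E = +oo%E]].

End Defs.

(* Main.v *)
Require Import Defs.
From HB Require Import structures.
From mathcomp Require Import all_boot all_order all_algebra.
From mathcomp Require Import all_classical all_reals all_analysis.
From mathcomp Require Import measurable_realfun.
From mathcomp Require Import ring lra.
Import Order.TTheory GRing.Theory Num.Theory numFieldNormedType.Exports.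
Local Open Scope classical_set_scope.
Local Open Scope ring_scope.

Section S.
Context {R : realType} {H : choiceType} (d : H -> H -> R).
Notation mu := (@lebesgue_measure R).

Lemma derive1_Dsub (D : R) : (fun x => D - x : R^o)^`()%classic = cst (-1).
Proof. by apply/funext => x; rewrite derive1E deriveB// derive_id derive_cst sub0r. Qed.

Lemma subst_refl (G : R -> R) (D : R) : 0 <= D -> continuous G ->
  (\int[mu]_(x in `[0%R, D]) (G x)%:E = \int[mu]_(x in `[0%R, D]) (G (D - x))%:E)%E.
Proof.
move=> D0 cG.
have := @integration_by_substitution_decreasing R (fun x => D - x) G 0 D D0.
rewrite subrr subr0 => -> //.
- apply: eq_integral => x _; rewrite !fctE derive1_Dsub opprK mulr1 //.
- by move=> x y _ _ xy; rewrite ltrD2l ltrN2.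
- by rewrite derive1_Dsub; move=> ? ?; exact: cvg_cst.
- by rewrite derive1_Dsub; exact: is_cvg_cst.
- by rewrite derive1_Dsub; exact: is_cvg_cst.
- split => /=.
  + by move=> x _; exact: derivableB.
  + apply: cvg_at_right_filter.
    by apply: cvgB => //; exact: cvg_cst.
  + by apply: cvg_at_left_filter; apply: cvgB => //; exact: cvg_cst.
- exact: continuous_subspaceT.
Qed.

Lemma holder_cont (F : R -> R) (Cc a k : R) : 0 < a -> 0 <= k ->
  (forall t s, `|F t - F s| <= Cc * (`|t - s| * k) `^ a) -> continuous F.
Proof.
move=> a0 k0 hF t; apply/cvgrPdist_lt => e e0.
set c := `|Cc| + 1.
have c0 : 0 < c by rewrite /c ltr_wpDl.
set y0 := (e / c) `^ (a^-1).
have y00 : 0 < y0 by apply: powR_gt0; rewrite divr_gt0.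
have y0a : y0 `^ a = e / c.
  by rewrite /y0 -powRrM mulVf ?gt_eqF// powRr1// ltW// divr_gt0.
apply/nbhs_ballP; exists (y0 / (k + 1)) => /=.
  by rewrite divr_gt0// ltr_wpDl.
move=> s /= hs.
have x0 : 0 <= `|t - s| * k by rewrite mulr_ge0.
have xy : `|t - s| * k < y0.
  have k1 : 0 < k + 1 by rewrite ltr_wpDl.
  apply: (le_lt_trans (y := `|t - s| * (k + 1))).
    by rewrite ler_wpM2l// lerDl.
  by rewrite -ltr_pdivlMr.
have := gt0_ltr_powR a0 _ _ xy; rewrite y0a => /(_ x0 (ltW y00)) hlt.
apply: (le_lt_trans (hF t s)).
apply: (le_lt_trans (y := c * (`|t - s| * k) `^ a)).
  apply: (le_trans (y := `|Cc| * (`|t - s| * k) `^ a)).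
    by rewrite ler_wpM2r ?powR_ge0// ler_norm.
  by rewrite ler_wpM2r ?powR_ge0// lerDl.
by rewrite mulrC -ltr_pdivlMr.
Qed.

Definition Kexp : R := fine (\int[lebesgue_measure]_(t in [set: R]) (expR (- `|t|))%:E)%E.

Lemma Kexp_ge0 : 0 <= Kexp.
Proof. by rewrite /Kexp fine_ge0// integral_ge0// => x _; rewrite lee_fin expR_ge0. Qed.

Lemma fine_mulEge0 (c : R) (K : \bar R) : 0 <= c -> (0 <= K)%E ->
  fine (c%:E * K)%E = c * fine K.
Proof.
move=> c0; case: K => [r| |] //= _.
have [->|cp] := eqVneq c 0; first by rewrite mul0e /= mul0r.
rewrite gt0_muley/=; first by rewrite mulr0.
by rewrite lte_fin lt_neqAle eq_sym cp.
Qed.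

Lemma distSH_const (g1 g2 : R -> H) (c : R) : 0 <= c ->
  (forall u, d (g1 u) (g2 u) = c) -> distSH d g1 g2 = c * (2^-1 * Kexp).
Proof.
move=> c0 hc; rewrite /distSH /Kexp.
under eq_integral do rewrite hc EFinM.
rewrite ge0_integralZl_EFin//; last first.
- apply/measurable_EFinP; apply: measurableT_comp; first exact: measurable_expR.
  apply: measurableT_comp => //; exact: normr_measurable.
rewrite fine_mulEge0// 1?mulrCA//.
by rewrite integral_ge0// => x _; rewrite lee_fin expR_ge0.
Qed.

Lemma cosh_sinh (x : R) : cosh x * cosh x - sinh x * sinh x = 1.
Proof.
rewrite /cosh /sinh.
have h : expR x * expR (- x) = 1 by rewrite -expRD subrr expR0.
set a := expR x in h *; set b := expR (- x) in h *.
by rewrite -[RHS]h; field.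
Qed.

Lemma cosh0 : cosh (0 : R) = 1.
Proof. by rewrite /cosh oppr0 expR0 -[1 + 1]/(2%:R) divff. Qed.

Lemma cosh_le1 (x : R) : 0 <= x -> cosh x <= 1 -> x = 0.
Proof.
move=> x0 hc; apply/eqP; apply/negPn/negP => xn0.
have xp : 0 < x by rewrite lt_neqAle eq_sym xn0.
have e1 : 1 < expR x by rewrite -expR0 ltr_expR.
have h : expR x * expR (- x) = 1 by rewrite -expRD subrr expR0.
have ep : 0 < expR (- x) := expR_gt0 _.
move: hc; rewrite /cosh.
set a := expR x in h e1 *; set b := expR (- x) in h ep *.
move=> hc.
have : (a - 1) * (a - 1) * b > 0 by rewrite mulr_gt0// mulr_gt0// subr_gt0.
have -> : (a - 1) * (a - 1) * b = a + b - 2.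
  have -> : (a - 1) * (a - 1) * b = a * (a * b) - 2 * (a * b) + b by ring.
  by rewrite h; ring.
lra.
Qed.

Lemma geo_flow (g : R -> H) t : is_geodesic d g -> is_geodesic d (flow t g).
Proof. by move=> hg s u; rewrite /flow hg; congr `|_|; ring. Qed.

Lemma geo_flip (g : R -> H) : is_geodesic d g -> is_geodesic d (flip g).
Proof. by move=> hg s u; rewrite /flip hg -normrN; congr `|_|; ring. Qed.

Lemma geo_comp (h : H -> H) (g : R -> H) : Defs.isometry d h -> is_geodesic d g ->
  is_geodesic d (h \o g).
Proof. by move=> [hi _] hg s u; rewrite /= hi hg. Qed.

Lemma seg_unique (c1 c2 : R -> H) p q : CAT_minus1 d ->
  is_segment d c1 p q -> is_segment d c2 p q ->
  forall s, 0 <= s <= d p q -> c1 s = c2 s.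
Proof.
move=> [[d0 deq dsym dtri] [_ cat]] hc1 hc2 s hs.
have [D0|Dn0] := eqVneq (d p q) 0.
  move: hs; rewrite D0 => /andP[s0 s0'].
  have -> : s = 0 by apply/eqP; rewrite eq_le s0' s0.
  by case: hc1 => ->; case: hc2 => ->.
have Dp : 0 < d p q by rewrite lt_neqAle eq_sym Dn0 d0.
have := cat p q q c1 c2 hc1 hc2 s s hs hs.
have -> : d q q = 0 by apply/deq.
rewrite /cosh_comparison cosh0.
have shp : 0 < sinh (d p q).
  by rewrite /sinh divr_gt0// subr_gt0 ltr_expR -subr_gt0 opprK -mulr2n mulrn_wgt0.
have -> : cosh (d p q) * cosh (d p q) - 1 = sinh (d p q) * sinh (d p q).
  by have := cosh_sinh (d p q); lra.
have sh0 : sinh (d p q) != 0 by rewrite gt_eqF.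
rewrite divff; last by rewrite mulf_neq0.
move=> hle; have {}hle : cosh (d (c1 s) (c2 s)) <= 1.
  by move: hle; rewrite (mulr1 (sinh s * sinh s)) cosh_sinh.
by apply/deq/cosh_le1.
Qed.
End S.

Section T.
Context {R : realType} {H : choiceType} (d : H -> H -> R).
Notation mu := (@lebesgue_measure R).

Lemma Ccont (Phi : (R -> H) -> R) (Gam : R -> R -> H) : classH d Phi ->
  (forall t, is_geodesic d (Gam t)) ->
  (forall t s u, d (Gam t u) (Gam s u) = `|t - s|) ->
  continuous (fun t => Phi (Gam t)).
Proof.
move=> [_ [[C [a [/andP[a0 _] hol]]] _]] hg hd.
apply: (@holder_cont _ _ C a (2^-1 * Kexp)) => //.
  by rewrite mulr_ge0 ?Kexp_ge0// invr_ge0.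
move=> t s; rewrite -(@distSH_const _ _ d (Gam t) (Gam s)) //.
exact: hol.
Qed.

Lemma setI_itv (D : R) : [set t : R | 0 <= t <= D] = `[0, D]%classic.
Proof. by apply/seteqP; split => x /=; rewrite in_itv. Qed.

Lemma key_point (G : set (H -> H)) (Phi : (R -> H) -> R) gpq (g h : H -> H) (p : H) (t : R) :
  CAT_minus1 d -> isom_subgroup d G -> classH d Phi -> G_invariant d G Phi ->
  geodesic_choice d gpq ->
  G g -> G h -> g \o h = id -> h \o g = id -> p <> g p -> 0 < t <= d p (g p) ->
  Phi (flip (flow t (gpq p (g p)))) = Phi (flow (d p (g p) - t) (gpq p (h p))).
Proof.
move=> hcat [hiso _ _ _] [_ [_ hloc]] hinv hch Gg Gh gh hg pg /andP[t0 tD].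
have [[d0 deq dsym dtri] _] := hcat.
have [gi _] := hiso g Gg.
have ihs := hiso h Gh.
have hgp : h (g p) = p by have := congr1 (fun f => f p) hg.
have ghp : g (h p) = p by have := congr1 (fun f => f p) gh.
have dh : d p (h p) = d p (g p) by rewrite -gi ghp dsym.
have ph : p <> h p by move=> e; apply: pg; rewrite {2}e ghp.
have [gam0 gam1 gam2] := hch p (g p) pg.
have [gam0' gam1' gam2'] := hch p (h p) ph.
set gam := gpq p (g p) in gam0 gam1 gam2 *.
set gam' := gpq p (h p) in gam0' gam1' gam2' *.
set D := d p (g p) in dh t0 tD *.
rewrite -(hinv h) //; last exact/geo_flip/geo_flow.
apply: hloc.
- exact/geo_comp/geo_flip/geo_flow.
- exact/geo_flow.
exists t; split => // s /andP[s0 st].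
rewrite /= /flip /flow.
pose c u := h (gam (D - u)).
have segc : is_segment d c p (h p).
  split; first by rewrite /c subr0 gam2.
  split; first by rewrite /c dh subrr gam1.
  move=> u v _ _; rewrite /c ihs.1 gam0 -normrN; congr `|_|; ring.
have segg : is_segment d gam' p (h p).
  by split => //; split => // u v _ _; exact: gam0'.
have := @seg_unique _ _ d _ _ _ _ hcat segc segg (s + (D - t)).
rewrite dh => <-; last by apply/andP; split; lra.
by rewrite /c; congr (h (gam _)); ring.
Qed.

Lemma integrable_cont (F : R -> R) (D : R) : continuous F ->
  mu.-integrable `[0, D] (EFin \o F).
Proof.
move=> cF; apply: continuous_compact_integrable; first exact: segment_compact.
exact: continuous_subspaceT.
Qed.

Lemma measurable_cont (F : R -> R) (A : set R) : measurable A -> continuous F ->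
  measurable_fun A F.
Proof.
move=> mA cF; apply: (measurable_funS measurableT) => //.
exact: continuous_measurable_fun.
Qed.

Lemma dPsi_pp gpq (Psi : (R -> H) -> R) p : is_metric d -> dPsi d gpq Psi p p = 0.
Proof.
move=> [_ deq _ _]; rewrite /dPsi setI_itv.
have -> : d p p = 0 by apply/deq.
by rewrite set_itv1 integral_set1.
Qed.

Lemma dPsi_Sym (Phi : (R -> H) -> R) gpq p q : is_metric d -> classH d Phi ->
  geodesic_choice d gpq ->
  dPsi d gpq (Sym Phi) p q = (dPsi d gpq Phi p q + dPsi d gpq (hat Phi) p q) / 2.
Proof.
move=> hm hPhi hch.
have [<-|pq] := eqVneq p q.
  by rewrite !dPsi_pp// addr0 mul0r.
have [gam0 _ _] := hch p q (elimN eqP pq).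
set gam := gpq p q in gam0 *.
set D := d p q.
have c1 : continuous (fun t => Phi (flow t gam)).
  apply: (@Ccont Phi (fun t => flow t gam)) => // [t|t s u].
    exact: geo_flow.
  by rewrite /flow gam0; congr `|_|; ring.
have c2 : continuous (fun t => Phi (flip (flow t gam))).
  apply: (@Ccont Phi (fun t => flip (flow t gam))) => // [t|t s u].
    exact/geo_flip/geo_flow.
  by rewrite /flip /flow gam0; congr `|_|; ring.
have i1 := @integrable_cont _ D c1.
have i2 := @integrable_cont _ D c2.
rewrite /dPsi setI_itv -/D.
transitivity (\int[mu]_(x in `[0, D]) ((Phi (flow x gam) + Phi (flip (flow x gam))) * 2^-1)); first by [].
rewrite RintegralZr//; first by rewrite RintegralD.
have : mu.-integrable `[0, D] ((EFin \o (fun t => Phi (flow t gam))) \+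
   (EFin \o (fun t => Phi (flip (flow t gam)))))%E by apply: integrableD.
by apply: eq_integrable => // x _.

Qed.

Lemma dPsi_hat (G : set (H -> H)) (Phi : (R -> H) -> R) gpq (g h : H -> H) (p : H) :
  CAT_minus1 d -> isom_subgroup d G -> classH d Phi -> G_invariant d G Phi ->
  geodesic_choice d gpq ->
  G g -> G h -> g \o h = id -> h \o g = id ->
  dPsi d gpq (hat Phi) p (g p) = dPsi d gpq Phi p (h p).
Proof.
move=> hcat hG hPhi hinv hch Gg Gh gh hg.
have hm := hcat.1.
have [[d0 deq dsym dtri] _] := hcat.
have [hiso _ _ _] := hG.
have [gi _] := hiso g Gg.
have hgp : h (g p) = p by have := congr1 (fun f => f p) hg.
have ghp : g (h p) = p by have := congr1 (fun f => f p) gh.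
have [pg|pg] := eqVneq p (g p).
  have hp : h p = p by rewrite {1}pg hgp.
  by rewrite -pg hp !dPsi_pp.
have dh : d p (h p) = d p (g p) by rewrite -gi ghp dsym.
have ph : p <> h p by move=> e; move: pg; rewrite {2}e ghp eqxx.
have [gam0 _ _] := hch p (g p) (elimN eqP pg).
have [gam0' _ _] := hch p (h p) ph.
set gam := gpq p (g p) in gam0 *.
set gam' := gpq p (h p) in gam0' *.
rewrite /dPsi !setI_itv dh /hat.
set D := d p (g p).
have D0 : 0 <= D by exact: d0.
have c1 : continuous (fun t => Phi (flow t gam')).
  apply: (@Ccont Phi (fun t => flow t gam')) => // [t|t s u].
    exact: geo_flow.
  by rewrite /flow gam0'; congr `|_|; ring.
have c2 : continuous (fun t => Phi (flip (flow t gam))).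
  apply: (@Ccont Phi (fun t => flip (flow t gam))) => // [t|t s u].
    exact/geo_flip/geo_flow.
  by rewrite /flip /flow gam0; congr `|_|; ring.
have c3 : continuous (fun t => Phi (flow (D - t) gam')).
  apply: (@Ccont Phi (fun t => flow (D - t) gam')) => // [t|t s u].
    exact: geo_flow.
  by rewrite /flow gam0' -normrN; congr `|_|; ring.
congr fine.
rewrite (subst_refl _ _ D0 c1).
apply: eq_integral_itv_bounded.
- exact: measurable_cont.
- exact: measurable_cont.
move=> x; rewrite in_itv /= => /andP[x0 xD].
apply: (@key_point G Phi gpq g h p x hcat hG hPhi hinv hch Gg Gh gh hg (elimN eqP pg)).
by rewrite x0 ltW.
Qed.

Lemma expR_mid (x y : R) : expR ((x + y) / 2) <= expR x + expR y.
Proof.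
have [xy|yx] := leP x y.
  apply: (le_trans (y := expR y)); last by rewrite lerDr expR_ge0.
  by rewrite ler_expR; lra.
apply: (le_trans (y := expR x)); last by rewrite lerDl expR_ge0.
by rewrite ler_expR; lra.
Qed.
End T.

Lemma ereal_xx_y {R : realType} (x : \bar R) : (0 <= x)%E -> (x + x)%E = +oo%E -> x = +oo%E.
Proof. by case: x. Qed.

Theorem lemma4p7 (R : realType) (H : choiceType) (d : H -> H -> R)
  (G : set (H -> H)) (Phi : (R -> H) -> R) (gpq : H -> H -> R -> H) (p : H) :
  CAT_minus1 d -> segments_extend d ->
  isom_subgroup d G -> cocompact d G ->
  classH d Phi -> G_invariant d G Phi ->
  geodesic_choice d gpq ->
  crit_exp d G gpq Phi p = crit_exp d G gpq (hat Phi) p /\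
  (crit_exp d G gpq (Sym Phi) p <= crit_exp d G gpq Phi p)%E.
Proof.
move=> hcat _ hG _ hPhi hinv hch.
have hm := hcat.1.
have [[d0 deq dsym dtri] _] := hcat.
have [hiso _ _ hinvG] := hG.
pose P g h := G h /\ g \o h = id /\ h \o g = id.
pose e (g : H -> H) : H -> H :=
  if pselect (exists h, P g h) is left ex then projT1 (cid ex) else g.
have eP : forall g, G g -> P g (e g).
  move=> g Gg; rewrite /e; case: pselect => [ex|nex].
    exact: (projT2 (cid ex)).
  by exfalso; apply: nex; exact: hinvG.
have eK : forall g, G g -> e (e g) = g.
  move=> g Gg; have [Gh [gh hg]] := eP g Gg.
  have [Ghh [hh' h'h]] := eP _ Gh.
  by rewrite -[e (e g)]/(id \o e (e g)) -gh -compA hh'.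
have ebij : set_bij G G e.
  split.
  - by move=> g Gg; have [] := eP g Gg.
  - by move=> x y /set_mem Gx /set_mem Gy exy; rewrite -(eK x Gx) -(eK y Gy) exy.
  - by move=> y Gy; exists (e y); [have [] := eP y Gy | exact: eK].
have dE : forall g, G g -> d p (e g p) = d p (g p).
  move=> g Gg; have [Gh [gh hg]] := eP g Gg.
  have [gi _] := hiso g Gg.
  have ghp : g (e g p) = p by have := congr1 (fun f => f p) gh.
  by rewrite -gi ghp dsym.
have E1 : forall lam : R,
  (\esum_(g in G) (expR (- dPsi d gpq (hat Phi) p (g p) - lam * d p (g p)))%:E =
   \esum_(g in G) (expR (- dPsi d gpq Phi p (g p) - lam * d p (g p)))%:E)%E.
  move=> lam; rewrite [RHS](@reindex_esum _ _ _ G G e (fun j => (expR (- dPsi d gpq Phi p (j p) - lam * d p (j p)))%:E) ebij); apply: eq_esum => g Gg.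
  have [Gh [gh hg]] := eP g Gg.
  by rewrite (@dPsi_hat _ _ d G Phi gpq g (e g) p hcat hG hPhi hinv hch Gg Gh gh hg) dE.
split.
  have EE : [set lam : R | (\esum_(g in G)
       (expR (- dPsi d gpq Phi p (g p) - lam * d p (g p)))%:E = +oo)%E] =
     [set lam : R | (\esum_(g in G)
       (expR (- dPsi d gpq (hat Phi) p (g p) - lam * d p (g p)))%:E = +oo)%E].
    apply/seteqP; split => lam hl; rewrite /mkset in hl *.
      by rewrite (E1 lam).
    by rewrite -(E1 lam).
  by rewrite /crit_exp EE.
rewrite /crit_exp; apply: ereal_sup_le => _ [lam hl <-]; exists lam => //.
rewrite /mkset in hl *.
apply: ereal_xx_y; first by apply: esum_ge0 => g _; rewrite lee_fin expR_ge0.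
apply/eqP; rewrite eq_le leey andTb -hl.
rewrite -[X in (_ + X)%E](E1 lam) -esumD; last 2 first.
- by move=> g _; rewrite lee_fin expR_ge0.
- by move=> g _; rewrite lee_fin expR_ge0.
apply: le_esum => g Gg; rewrite -EFinD lee_fin.
rewrite (@dPsi_Sym _ _ d Phi gpq p (g p) hm hPhi hch).
set a := dPsi d gpq Phi p (g p).
set b := dPsi d gpq (hat Phi) p (g p).
set D := d p (g p).
have -> : - ((a + b) / 2) - lam * D = ((- a - lam * D) + (- b - lam * D)) / 2 by field.
exact: expR_mid.
Qed.
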